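(* Let $1\le\ell\le k-1$ be integers with $k-\ell$ not dividing $k$ and let $\varepsilon>0$. Then there is $t_0$ such that for every integer $t\ge t_0$ there is a $k$-partite $k$-uniform $\ell$-cycle on $m=t(k-\ell)$ vertices whose parts have sizes $\alpha_1 m,\dots,\alpha_k m$ with $|\alpha_1-\lambda(k,\ell)|\le\varepsilon$ and $|\alpha_i-(1-\lambda(k,\ell))/(k-1)|\le\varepsilon$ for all $2\le i\le k$.
   Context: A $k$-uniform $\ell$-cycle ($0\le\ell<k$) is a $k$-graph whose vertices can be cyclically ordered so that every edge consists of $k$ cyclically consecutive vertices and consecutive edges intersect in exactly $\ell$ vertices. A $k$-graph is $k$-partite (with parts $V_1,\dots,V_k$) if its vertex set is partitioned into $V_1,\dots,V_k$ such that every edge contains exactly one vertex from each part. Here $\lambda(k,\ell)=\dfrac{1}{\lceil k/(k-\ell)\rceil(k-\ell)}$. *)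

(* Defs.v *)
From HB Require Import structures.
From mathcomp Require Import all_boot all_order all_algebra.
From mathcomp Require Import reals.
Set Implicit Arguments. Unset Strict Implicit. Unset Printing Implicit Defensive.
Import Order.TTheory GRing.Theory Num.Theory.

Definition cyc_edge (m k l j : nat) : {set 'I_m} :=
  [set v : 'I_m | [exists i : 'I_k, val v == (j * (k - l) + i) %% m]].

(* The hypergraph with vertex set 'I_m (m = t(k-l)) and edges cyc_edge j,
   j < t, is a k-uniform l-cycle: every edge has exactly k vertices and
   consecutive edges (cyclically: edge t = edge 0) meet in exactly l vertices. *)
Definition kpartite_lcycle (k l t : nat) (sizes : 'I_k -> nat) : Prop :=
  let m := t * (k - l) in
  (forall j, j < t ->
     #|cyc_edge m k l j| = k /\
     #|cyc_edge m k l j :&: cyc_edge m k l j.+1| = l) /\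
  exists col : 'I_m -> 'I_k,
    (forall j, j < t -> forall c : 'I_k,
        #|[set v in cyc_edge m k l j | col v == c]| = 1) /\
    (forall c : 'I_k, #|[set v | col v == c]| = sizes c).
Arguments kpartite_lcycle : clear implicits.

Definition ceil_div (a b : nat) : nat := (a + b.-1) %/ b.

Definition lambda_kl {R : realType} (k l : nat) : R :=
  (1 / ((ceil_div k (k - l) * (k - l))%:R))%R.

(* Main.v *)
Require Import Defs.
From HB Require Import structures.
From mathcomp Require Import all_boot all_order all_algebra.
From mathcomp Require Import reals.
From mathcomp Require Import zify.
From mathcomp.algebra_tactics Require Import ring lra.

Module Helpers.
Set Implicit Arguments. Unset Strict Implicit. Unset Printing Implicit Defensive.

Lemma mod_lt2 x K : x < K + K -> x %% K = (if x < K then x else x - K).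
Proof.
case: ifP => h hx; first by rewrite modn_small.
have -> : x = (x - K) + K by lia.
by rewrite modnDr modn_small; lia.
Qed.

Lemma mod_shift i K x : (i * K + x) %% K = x %% K.
Proof. by rewrite modnMDl. Qed.

Section Ev.
Variables (s a b t : nat).
Hypothesis hs : 2 <= s.
Hypothesis ht : a * s + b * s.-1 = t.
Hypothesis hts : s <= t.

Definition evP f := (f < a * s) && (f %% s == s.-1).
Definition evS f := [&& a * s <= f, f < t & (f - a * s) %% s.-1 == s.-2].

Lemma LP w dl : w < t -> dl <= s.-1 -> evP ((w + dl) %% t) ->
  w < a * s /\ dl = s.-1 - w %% s.
Proof.
move=> hw hdl; rewrite /evP.
have h2 : w + dl < t + t by lia.
rewrite (mod_lt2 h2); case: ifP => hwt.
- case/andP=> h1 /eqP h3; split; first lia.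
  move: h3; rewrite (divn_eq w s) -addnA mod_shift.
  have hr : w %% s < s by rewrite ltn_mod; lia.
  have h4 : w %% s + dl < s + s by lia.
  rewrite (mod_lt2 h4) modnMDl (modn_small hr).
  case: ifP => _; lia.
- case/andP=> _ /eqP; rewrite modn_small; lia.
Qed.

Lemma LS w dl : w < t -> dl <= s.-2 -> evS ((w + dl) %% t) ->
  a * s <= w /\ dl = s.-2 - (w - a * s) %% s.-1.
Proof.
move=> hw hdl; rewrite /evS.
have h2 : w + dl < t + t by lia.
rewrite (mod_lt2 h2); case: ifP => hwt.
- case/and3P=> h1 _ /eqP h3.
  case: (leqP (a * s) w) => haw.
  + split => //.
    move: h3; have -> : w + dl - a * s = (w - a * s) + dl by lia.
    rewrite (divn_eq (w - a * s) s.-1) -addnA mod_shift.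
    have hr : (w - a * s) %% s.-1 < s.-1 by rewrite ltn_mod; lia.
    have h4 : (w - a * s) %% s.-1 + dl < s.-1 + s.-1 by lia.
    rewrite (mod_lt2 h4) modnMDl (modn_small hr).
    case: ifP => _; lia.
  + move: h3; rewrite modn_small; lia.
- case/and3P=> h1 _ /eqP; rewrite modn_small; lia.
Qed.

Lemma EP w : w < a * s -> evP ((w + (s.-1 - w %% s)) %% t).
Proof.
move=> hw.
have hr : w %% s < s by rewrite ltn_mod; lia.
have hd := divn_eq w s.
have hq : w %/ s < a by rewrite ltn_divLR; lia.
have hq' : (w %/ s).+1 * s <= a * s by rewrite leq_mul2r hq orbT.
rewrite mulSn in hq'.
rewrite modn_small; last lia.
rewrite /evP; apply/andP; split; first lia.
have -> : w + (s.-1 - w %% s) = w %/ s * s + s.-1 by lia.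
by rewrite mod_shift modn_small //; lia.
Qed.

Lemma ES w : a * s <= w -> w < t -> evS ((w + (s.-2 - (w - a * s) %% s.-1)) %% t).
Proof.
move=> hw hwt.
have hr : (w - a * s) %% s.-1 < s.-1 by rewrite ltn_mod; lia.
have hd := divn_eq (w - a * s) s.-1.
have hq : (w - a * s) %/ s.-1 < b by rewrite ltn_divLR; lia.
have hq' : ((w - a * s) %/ s.-1).+1 * s.-1 <= b * s.-1 by rewrite leq_mul2r hq orbT.
rewrite mulSn in hq'.
rewrite modn_small; last lia.
rewrite /evS; apply/and3P; split; [lia|lia|].
have -> : w + (s.-2 - (w - a * s) %% s.-1) - a * s = (w - a * s) %/ s.-1 * s.-1 + s.-2 by lia.
by rewrite mod_shift modn_small //; lia.
Qed.

End Ev.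

Section Z.
Variables (k d q s a b t : nat).
Hypothesis hs : 2 <= s.
Hypothesis ht : a * s + b * s.-1 = t.
Hypothesis hts : s <= t.
Hypothesis hk : k = s.-1 * d + q.
Hypothesis hq0 : 0 < q.
Hypothesis hqd : q < d.

Lemma predmul x y : 0 < x -> x.-1 * y + y = x * y.
Proof. by case: x => // x _; rewrite mulSn addnC. Qed.

Definition isZ y := let e := (y %/ d) %% t in
  ((y %% d == 0) && evP s a e) || ((y %% d == q) && evS s a t e).

Lemma divmod_jd j i : (j * d + i) %/ d = j + i %/ d /\ (j * d + i) %% d = i %% d.
Proof.
have hd : 0 < d by lia.
by rewrite divnMDl // modnMDl.
Qed.

Lemma Zchar j i : i < k -> isZ (j * d + i) ->
  let w := j %% t in
  (w < a * s /\ i = (s.-1 - w %% s) * d) \/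
  (a * s <= w /\ i = (s.-2 - (w - a * s) %% s.-1) * d + q).
Proof.
move=> hi; rewrite /isZ; case: (divmod_jd j i) => -> ->.
have hd : 0 < d by lia.
have htp : 0 < t by lia.
have hw : j %% t < t by rewrite ltn_mod.
have hdi := divn_eq i d.
have hmi : i %% d < d by rewrite ltn_mod.
rewrite -modnDml.
case/orP => /andP [/eqP h0 hev].
- left.
  have hdl : i %/ d <= s.-1.
    have : i %/ d < s; last lia.
    rewrite ltn_divLR //.
    have := @predmul s d; have : 0 < s by lia.
    lia.
  have [h1 h2] := LP hs ht hts hw hdl hev.
  split => //; rewrite hdi h0 addn0 h2 //.
- right.
  have hdl : i %/ d <= s.-2.
    have : i %/ d * d < s.-1 * d by lia.
    rewrite ltn_mul2r; lia.
  have [h1 h2] := LS hs ht hts hw hdl hev.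
  split => //; rewrite hdi h0 h2 //.
Qed.

Lemma W2 j i1 i2 : i1 < k -> i2 < k -> isZ (j * d + i1) -> isZ (j * d + i2) -> i1 = i2.
Proof.
move=> h1 h2 z1 z2.
case: (Zchar h1 z1); case: (Zchar h2 z2); lia.
Qed.

Lemma W1 j : exists2 i, i < k & isZ (j * d + i).
Proof.
have hd : 0 < d by lia.
have htp : 0 < t by lia.
have hw : j %% t < t by rewrite ltn_mod.
case: (ltnP (j %% t) (a * s)) => hw'.
- exists ((s.-1 - j %% t %% s) * d).
    have : (s.-1 - j %% t %% s) * d <= s.-1 * d by rewrite leq_mul2r; lia.
    lia.
  rewrite /isZ; case: (divmod_jd j ((s.-1 - j %% t %% s) * d)) => -> ->.
  rewrite mulnK // modnMl eqxx /= -modnDml.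
  by rewrite (EP hs ht hts hw').
- exists ((s.-2 - (j %% t - a * s) %% s.-1) * d + q).
    have : (s.-2 - (j %% t - a * s) %% s.-1) * d <= s.-2 * d by rewrite leq_mul2r; lia.
    have := @predmul s.-1 d; have : 0 < s.-1 by lia.
    lia.
  rewrite /isZ; case: (divmod_jd j ((s.-2 - (j %% t - a * s) %% s.-1) * d + q)) => -> ->.
  rewrite divnMDl // modnMDl (divn_small hqd) (modn_small hqd) addn0 eqxx.
  rewrite orbC /= -modnDml.
  by rewrite (ES hs ht hts hw' hw).
Qed.

Lemma isZ_per y : isZ (y + t * d) = isZ y.
Proof.
have hd : 0 < d by lia.
rewrite /isZ divnDMl // (addnC y) modnMDl.
by rewrite -modnDmr modnn addn0.
Qed.

End Z.

Lemma iotaS0 M : iota 0 M.+1 = iota 0 M ++ [:: M].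
Proof. by rewrite -addn1 iotaD. Qed.

Lemma iota_shift m n : iota m n = map (addn m) (iota 0 n).
Proof. by rewrite -iotaDl addn0. Qed.

Lemma count_pred1_iota c K : c < K -> count (pred1 c) (iota 0 K) = 1.
Proof. by move=> h; rewrite count_uniq_mem ?iota_uniq // mem_iota h. Qed.

Lemma CM K c M : c < K -> count (fun x => x %% K == c) (iota 0 (M * K)) = M.
Proof.
move=> hc; elim: M => [|M IH]; first by rewrite mul0n.
rewrite mulSnr iotaD count_cat IH add0n iota_shift count_map.
rewrite -[RHS]addn1; congr (_ + _).
apply: eq_trans (count_pred1_iota hc); apply: eq_in_count => x; rewrite mem_iota /= => hx.
by rewrite modnMDl modn_small.
Qed.

Lemma RT (P Q : pred nat) M :
  count (fun y => P y && Q (count P (iota 0 y))) (iota 0 M) =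
  count Q (iota 0 (count P (iota 0 M))).
Proof.
elim: M => [|M IH] //.
rewrite !iotaS0 !count_cat IH /=.
case: (P M) => /=; last by rewrite !addn0.
by rewrite addn1 iotaS0 count_cat /= addn0.
Qed.

Lemma count_or01 d q X Y : 0 < q -> q < d ->
  count (fun o => ((o == 0) && X) || ((o == q) && Y)) (iota 0 d) = X + Y.
Proof.
move=> h0 h1.
have E : forall c (Z : bool), c < d -> count (fun o => (o == c) && Z) (iota 0 d) = Z.
  move=> c Z hc; case: Z.
  - apply: eq_trans (count_pred1_iota hc); apply: eq_count => x /=; by rewrite andbT.
  - rewrite (eq_count (a2 := pred0)) ?count_pred0 // => x /=; by rewrite andbF.
have h0d : 0 < d by lia.
rewrite -(E 0 X h0d) -(E q Y h1).
rewrite -(count_predUI (fun o => (o == 0) && X) (fun o => (o == q) && Y)).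
rewrite [X in _ = _ + X](eq_count (a2 := pred0)) ?count_pred0 ?addn0 //.
move=> x /=; case: (x =P 0) => [->|] //=; rewrite eq_sym; case: (q =P 0) => //; lia.
Qed.

Section Cnt.
Variables (k d q s a b t : nat).
Hypothesis hs : 2 <= s.
Hypothesis ht : a * s + b * s.-1 = t.
Hypothesis hts : s <= t.
Hypothesis hk : k = s.-1 * d + q.
Hypothesis hq0 : 0 < q.
Hypothesis hqd : q < d.

Lemma count_evP : count (evP s a) (iota 0 t) = a.
Proof.
rewrite -ht iotaD count_cat add0n (iota_shift (a * s)) count_map.
rewrite (eq_count (a2 := pred0) (a1 := preim _ _)) ?count_pred0 ?addn0; last first.
  by move=> x /=; rewrite /evP; have -> : (a * s + x < a * s) = false by lia.
rewrite -[RHS](@CM s s.-1 a); last lia.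
apply: eq_in_count => x; rewrite mem_iota add0n /evP => /andP [_ h]; by rewrite h.
Qed.

Lemma count_evS : count (evS s a t) (iota 0 t) = b.
Proof.
rewrite -{2}ht iotaD count_cat add0n (iota_shift (a * s)) count_map.
rewrite (eq_in_count (a2 := pred0) (a1 := evS s a t)) ?count_pred0 ?add0n; last first.
  by move=> x; rewrite mem_iota => hx; rewrite /evS; have -> : (a * s <= x) = false by lia.
rewrite -[RHS](@CM s.-1 s.-2 b); last lia.
apply: eq_in_count => x; rewrite mem_iota => hx /=; rewrite /evS.
have -> : (a * s <= a * s + x) = true by lia.
have -> : (a * s + x < t) = true by lia.
by rewrite addKn.
Qed.

Lemma count_isZ T : T <= t -> count (isZ d q s a t) (iota 0 (T * d)) =
   count (evP s a) (iota 0 T) + count (evS s a t) (iota 0 T).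
Proof.
elim: T => [|T IH] hT; first by rewrite mul0n.
rewrite mulSnr iotaD count_cat IH; last lia.
rewrite !iotaS0 !count_cat /= !addn0 add0n.
have -> : count (isZ d q s a t) (iota (T * d) d) = evP s a T + evS s a t T.
  rewrite iota_shift count_map -(@count_or01 d q) //.
  apply: eq_in_count => o; rewrite mem_iota /= => ho.
  have hd : 0 < d by lia.
  rewrite /isZ divnMDl // modnMDl divn_small // modn_small // addn0 modn_small //.
lia.
Qed.

Lemma count_Z : count (isZ d q s a t) (iota 0 (t * d)) = a + b.
Proof. by rewrite count_isZ // count_evP count_evS. Qed.

End Cnt.

Section Col.
Variables (k d q s a b t : nat).
Hypothesis hs : 2 <= s.
Hypothesis ht : a * s + b * s.-1 = t.
Hypothesis hts : s <= t.
Hypothesis hk : k = s.-1 * d + q.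
Hypothesis hq0 : 0 < q.
Hypothesis hqd : q < d.
Hypothesis hdiv : k.-1 %| t * d - (a + b).

Local Notation Z := (isZ d q s a t).
Definition rk y := count (predC Z) (iota 0 y).
Definition colN y := if Z y then 0 else (rk y %% k.-1).+1.

Lemma rk_m : rk (t * d) = t * d - (a + b).
Proof.
rewrite /rk -(count_Z hs ht hts hk hq0 hqd).
have := count_predC Z (iota 0 (t * d)); rewrite size_iota; lia.
Qed.

Lemma rk_per y : rk (y + t * d) = rk (t * d) + rk y.
Proof.
rewrite /rk addnC iotaD count_cat add0n; congr (_ + _).
rewrite (iota_shift (t * d)) count_map; apply: eq_count => x /=.
by rewrite addnC (isZ_per hs ht hts hk hq0 hqd).
Qed.

Lemma colN_per y : colN (y + t * d) = colN y.
Proof.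
rewrite /colN (isZ_per hs ht hts hk hq0 hqd) rk_per rk_m.
by rewrite -modnDml (eqP hdiv) add0n.
Qed.

Lemma colN_mod y : colN (y %% (t * d)) = colN y.
Proof.
rewrite {2}(divn_eq y (t * d)) addnC.
elim: (y %/ (t * d)) => [|c IH]; first by rewrite mul0n addn0.
by rewrite mulSnr addnA colN_per.
Qed.

Lemma colN_lt y : 0 < k -> colN y < k.
Proof.
move=> hk0; rewrite /colN; case: (Z y) => //.
have : d <= s.-1 * d by rewrite leq_pmull; lia.
move: (hk); set X := s.-1 * d => hk1 hX.
have : 0 < k.-1 by lia.
move=> h; move: (ltn_pmod (rk y) h); set r := (rk y %% k.-1); lia.
Qed.

Lemma rainbow j i1 i2 : i1 < k -> i2 < k ->
  colN (j * d + i1) = colN (j * d + i2) -> i1 = i2.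
Proof.
wlog lt12 : i1 i2 / i1 <= i2.
  move=> H h1 h2 e; case: (leqP i1 i2) => h; first exact: H.
  by symmetry; apply: H => //; lia.
move=> h1 h2; rewrite /colN.
case E1: (Z (j * d + i1)); case E2: (Z (j * d + i2)) => //.
- by move=> _; apply: (W2 hs ht hts hk hq0 hqd) E1 E2.
- move=> [] /eqP heq; case: (ltngtP i1 i2) => [hlt|hgt|->//]; last by lia.
  exfalso; move: heq.
  set x := j * d + i1; set y := j * d + i2.
  have hyx : y - x = i2 - i1 by rewrite /x /y subnDl.
  have Ry : rk y = rk x + count (predC Z) (iota x (y - x)).
    rewrite /rk; have -> : y = x + (y - x) by lia.
    by rewrite iotaD count_cat add0n addKn.
  set D := count (predC Z) (iota x (y - x)) in Ry.
  have hD1 : 0 < D.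
    rewrite /D; have -> : y - x = (y - x).-1.+1 by lia.
    by rewrite /= E1.
  have hsz : D + count Z (iota x (y - x)) = y - x.
    by rewrite /D addnC count_predC size_iota.
  have hD2 : D < k.-1.
    case: (W1 hs ht hts hk hq0 hqd j) => i0 hi0 Z0.
    case: (boolP ((i1 <= i0) && (i0 < i2))) => /andP.
    + case=> a1 a2.
      have : 0 < count Z (iota x (y - x)).
        rewrite -has_count; apply/hasP; exists (j * d + i0) => //.
        rewrite mem_iota /x /y; lia.
      lia.
    + move=> hn.
      have : i0 != i2 by apply/eqP => e; rewrite e E2 in Z0.
      lia.
  rewrite Ry -{1}[rk x]addn0 eqn_modDl mod0n modn_small; [by move/eqP; lia | lia].
Qed.

Lemma count_col0 : count (fun y => colN y == 0) (iota 0 (t * d)) = a + b.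
Proof.
rewrite -(count_Z hs ht hts hk hq0 hqd); apply: eq_count => y /=.
by rewrite /colN; case: (Z y).
Qed.

Lemma count_colc c : 0 < c -> c < k ->
  count (fun y => colN y == c) (iota 0 (t * d)) = (t * d - (a + b)) %/ k.-1.
Proof.
move=> c0 ck.
transitivity (count (fun r => r %% k.-1 == c.-1) (iota 0 (rk (t * d)))).
  rewrite /rk -RT; apply: eq_count => y /=.
  rewrite /colN; case: (Z y) => /=; first by rewrite eq_sym; lia.
  apply/eqP/eqP; lia.
rewrite rk_m -{1}(divnK hdiv) CM //; lia.
Qed.

End Col.

Lemma card_count m (P : pred nat) : #|[set v : 'I_m | P (val v)]| = count P (iota 0 m).
Proof.
rewrite cardsE cardE -val_enum_ord count_map.
rewrite /enum_mem size_filter /=.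
by rewrite (eq_filter (a2 := predT)) // filter_predT.
Qed.

Section Edge.
Variables m k l : nat.
Hypothesis hlk : l < k.
Hypothesis hkm : k + (k - l) <= m.

Lemma hm0 : 0 < m. Proof. lia. Qed.

Definition fe j (i : 'I_k) : 'I_m := Ordinal (ltn_pmod (j * (k - l) + i) hm0).

Lemma edgeE j : cyc_edge m k l j = fe j @: setT.
Proof.
apply/setP => v; rewrite inE; apply/existsP/imsetP.
- by case=> i /eqP e; exists i => //; apply: val_inj.
- by case=> i _ ->; exists i.
Qed.

Lemma mod_inj x i1 i2 : (x + i1) %% m = (x + i2) %% m -> i1 < m -> i2 < m -> i1 = i2.
Proof.
move=> /eqP + h1 h2; rewrite eqn_modDl !modn_small //; by move/eqP.
Qed.

Lemma fe_inj j : injective (fe j).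
Proof.
move=> i1 i2 /(congr1 val) /= e; apply: val_inj; apply: (mod_inj e).
  by have := ltn_ord i1; lia. by have := ltn_ord i2; lia.
Qed.

Lemma card_edge j : #|cyc_edge m k l j| = k.
Proof. by rewrite edgeE card_imset ?cardsT ?card_ord //; apply: fe_inj. Qed.

Definition ge j (i : 'I_l) : 'I_m := Ordinal (ltn_pmod (j * (k - l) + (k - l) + i) hm0).

Lemma ge_inj j : injective (ge j).
Proof.
move=> i1 i2 /(congr1 val) /= e; apply: val_inj; apply: (mod_inj e).
  by have := ltn_ord i1; lia. by have := ltn_ord i2; lia.
Qed.

Lemma interE j : cyc_edge m k l j :&: cyc_edge m k l j.+1 = ge j @: setT.
Proof.
apply/setP => v; rewrite inE !edgeE; apply/andP/imsetP.
- case=> /imsetP [i1 _ ->] /imsetP [i2 _ /(congr1 val) /= e].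
  rewrite mulSnr -addnA in e.
  have e' := mod_inj e.
  have hi2 : i2 < l.
    have hi2k := ltn_ord i2; have hi1k := ltn_ord i1.
    have : val i1 = k - l + i2 by apply: e'; lia.
    lia.
  exists (Ordinal hi2) => //; apply: val_inj => /=.
  rewrite -addnA; congr (_ %% _); congr (_ + _).
  have hi2k := ltn_ord i2; have hi1k := ltn_ord i1.
  apply: e' ; lia.
- case=> i _ ->; split; apply/imsetP.
  + have h : k - l + i < k by have := ltn_ord i; lia.
    exists (Ordinal h) => //; apply: val_inj => /=; by rewrite addnA.
  + have h : i < k by have := ltn_ord i; lia.
    exists (Ordinal h) => //; apply: val_inj => /=; by rewrite mulSnr.
Qed.

Lemma card_inter j : #|cyc_edge m k l j :&: cyc_edge m k l j.+1| = l.
Proof. by rewrite interE card_imset ?cardsT ?card_ord //; apply: ge_inj. Qed.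

Variable F : nat -> nat.
Hypothesis hF : forall y, F y < k.
Hypothesis hinj : forall j i1 i2, i1 < k -> i2 < k ->
  F (j * (k - l) + i1) = F (j * (k - l) + i2) -> i1 = i2.
Hypothesis hper : forall y, F (y %% m) = F y.

Definition colF (v : 'I_m) : 'I_k := Ordinal (hF v).

Lemma rainbow_set j (c : 'I_k) :
  #|[set v in cyc_edge m k l j | colF v == c]| = 1.
Proof.
have hh : injective (fun i => colF (fe j i)).
  move=> i1 i2 /(congr1 val) /=; rewrite !hper => e.
  by apply: val_inj; apply: hinj e.
have -> : [set v in cyc_edge m k l j | colF v == c] =
          fe j @: ((fun i => colF (fe j i)) @^-1: [set c]).
  apply/setP => v; rewrite edgeE !inE; apply/andP/imsetP.
  - by case=> /imsetP [i _ ->] hc; exists i => //; rewrite !inE.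
  - by case=> i; rewrite !inE => hc ->; split => //; apply: imset_f.
by rewrite card_imset ?card_preimset ?cards1 //; apply: fe_inj.
Qed.

End Edge.

Lemma params k l : 1 <= l -> l <= k - 1 -> ~~ (k - l %| k) ->
  2 <= ceil_div k (k - l) /\
  k = (ceil_div k (k - l)).-1 * (k - l) + k %% (k - l) /\
  0 < k %% (k - l) < k - l.
Proof.
move=> h1 h2 h3.
set d := k - l.
have hd : 0 < d by rewrite /d; lia.
have hr : 0 < k %% d by rewrite lt0n; move: h3; rewrite /dvdn.
have hrd : k %% d < d by rewrite ltn_mod.
have hk := divn_eq k d.
have hq1 : 0 < k %/ d by rewrite divn_gt0 // /d; lia.
have hs : ceil_div k d = (k %/ d).+1.
  rewrite /ceil_div.
  have -> : k + d.-1 = (k %/ d).+1 * d + (k %% d).-1.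
    rewrite mulSnr; move: hk hr; set X := k %/ d * d; set r := k %% d; lia.
  rewrite divnMDl //.
  have -> : (k %% d).-1 %/ d = 0 by rewrite divn_small //; move: hrd; set r := k %% d; lia.
  by rewrite addn0.
rewrite hs /=; split; first lia.
split; [exact: hk | by rewrite hr hrd].
Qed.

Lemma choose_ab k s d t : 2 <= s -> 3 <= k -> 0 < d -> (k + 1) * s * s <= t ->
  exists a b, [/\ a * s + b * s.-1 = t, k.-1 %| t * d - (a + b),
     (a + b) * s = t + b, b <= k.-1 * s & a + b <= t * d].
Proof.
move=> hs hk hd ht.
set n0 := (t + s.-1) %/ s.
set dl := (t * d + k.-2 * n0) %% k.-1.
set n := n0 + dl.
have hs0 : 0 < s by lia.
have e0 := divn_eq (t + s.-1) s.
have r0 : (t + s.-1) %% s < s by rewrite ltn_mod.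
have hdl : dl < k.-1 by rewrite ltn_mod; lia.
have hn0s : t <= n0 * s.
  move: e0 r0; rewrite -/n0; set X := n0 * s; lia.
have hn0s' : n0 * s <= t + s.-1.
  move: e0; rewrite -/n0; set X := n0 * s; lia.
have hns : n * s = n0 * s + dl * s by rewrite mulnDl.
have hdls : dl * s <= k.-2 * s by rewrite leq_mul2r; lia.
have key : n * s.-1 <= t.
  have hnk : n <= n0 + k.-2 by lia.
  have A8 : t * s = t * s.-1 + t by rewrite -{1}(prednK hs0) mulnS addnC.
  have hP : s.-1 < s by lia.
  move: A8 hn0s' hnk hdls ht hP; set P := s.-1; set K2 := k.-2 => A8 hn0s' hnk hdls ht hP.
  have A1 : n * P * s <= (n0 + K2) * P * s by rewrite !leq_mul2r hnk !orbT.
  have A2 : (n0 + K2) * P * s = n0 * s * P + K2 * s * P by rewrite !mulnDl !(mulnAC _ P s).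
  have A3 : n0 * s * P <= (t + P) * P by rewrite leq_mul2r hn0s' orbT.
  have A4 : (t + P) * P = t * P + P * P by rewrite mulnDl.
  have A5 : P * P <= s * s by rewrite leq_mul // ltnW.
  have hK2 : K2 <= k by rewrite /K2; lia.
  have A6 : K2 * s * P <= k * s * s by apply: leq_mul; [apply: leq_mul | apply: ltnW].
  have A7 : (k + 1) * s * s = k * s * s + s * s by rewrite mulnDl mul1n mulnDl.
  have : n * P * s <= t * s.
    move: A1 A2 A3 A4 A5 A6 A7 A8 ht.
    set x1 := n * P * s; set x2 := (n0 + K2) * P * s; set x3 := n0 * s * P; set x4 := K2 * s * P.
    set x5 := (t + P) * P; set x6 := t * P; set x7 := P * P; set x8 := s * s; set x9 := k * s * s.
    set x10 := (k + 1) * s * s; set x11 := t * s.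
    clear; lia.
  by rewrite leq_pmul2r.
have hbs : n * s = n * s.-1 + n by rewrite -{1}(prednK hs0) mulnS addnC.
set b := n * s - t.
set a := n - b.
exists a, b.
have hbn : b <= n by rewrite /b; lia.
have hab : a + b = n by rewrite /a; lia.
split.
- rewrite /a mulnBl.
  have : b * s = b * s.-1 + b by rewrite -{1}(prednK hs0) mulnS addnC.
  have : b * s <= n * s by rewrite leq_mul2r hbn orbT.
  rewrite /b; move: hbs key; set X := n * s; set Y := n * s.-1; set Z := (X - t) * s; set W := (X - t) * s.-1.
  lia.
- rewrite hab.
  have hnt : n <= t * d.
    have : t <= t * d by rewrite leq_pmulr.
    have : n <= n * s.-1 by rewrite leq_pmulr; lia.
    lia.
  rewrite -(eqn_mod_dvd _ hnt).
  have hmod : n %% k.-1 = (t * d) %% k.-1.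
    rewrite /n /dl modnDmr.
    have -> : n0 + (t * d + k.-2 * n0) = k.-1 * n0 + t * d.
      have : k.-2 * n0 + n0 = k.-1 * n0 by apply: predmul; lia.
      move: (k.-2 * n0) (k.-1 * n0) (t * d) => x y z; lia.
    by rewrite mulnC modnMDl.
  by rewrite hmod.
- rewrite hab /b; lia.
- rewrite /b; move: hns hn0s' hdls; set X := n * s; set Y := n0 * s; set Z := dl * s.
  have : k.-2 * s + s = k.-1 * s by apply: predmul; lia.
  lia.
- rewrite hab.
  have : t <= t * d by rewrite leq_pmulr.
  have : n <= n * s.-1 by rewrite leq_pmulr; lia.
  lia.
Qed.

End Helpers.
Import Helpers.

Import Order.TTheory GRing.Theory Num.Theory.
Local Open Scope ring_scope.

Lemma real_bound (R : realFieldType) (n t b s d K eps : R) :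
  0 < t -> 0 < s -> 1 <= d -> n * s = t + b -> 0 <= b -> b <= K * s ->
  K <= eps * t -> 0 < eps ->
  `|n / (t * d) - 1 / (s * d)| <= eps.
Proof.
move=> ht hs hd e hb0 hb he hep.
have hd0 : 0 < d by lra.
have -> : n / (t * d) - 1 / (s * d) = (n * s - t) / (t * s * d).
  by field; rewrite !gt_eqF.
rewrite e addrAC subrr add0r.
have hp : 0 < t * s * d by rewrite !mulr_gt0.
rewrite ger0_norm; last by rewrite divr_ge0 // ltW.
rewrite ler_pdivrMr //.
have h1 : K * s <= eps * t * s by rewrite ler_pM2r.
have h2 : eps * t * s <= eps * (t * s * d).
  rewrite !mulrA ler_peMr //.
  by rewrite !mulr_ge0 // ltW.
lra.
Qed.

Lemma real_bound2 (R : realFieldType) (x lam Kr eps : R) :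
  1 <= Kr -> `|x - lam| <= eps ->
  `|(1 - x) / Kr - (1 - lam) / Kr| <= eps.
Proof.
move=> hK h.
have hK0 : 0 < Kr by lra.
have -> : (1 - x) / Kr - (1 - lam) / Kr = (lam - x) / Kr by field; rewrite gt_eqF.
rewrite normrM [`|Kr^-1|]ger0_norm; last by rewrite invr_ge0 ltW.
rewrite distrC ler_pdivrMr //.
have : 0 <= `|x - lam| by [].
nra.
Qed.

Theorem corollary3p5 (R : realType) (k l : nat) (eps : R) :
  (1 <= l)%N -> (l <= k - 1)%N -> ~~ ((k - l) %| k)%N -> 0 < eps ->
  exists t0 : nat, forall t : nat, (t0 <= t)%N ->
    exists sizes : 'I_k -> nat,
      kpartite_lcycle k l t sizes /\
      forall i : 'I_k,
        let alpha : R := (sizes i)%:R / (t * (k - l))%:R in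
        if val i == 0%N then `|alpha - lambda_kl k l| <= eps
        else `|alpha - (1 - lambda_kl k l) / (k - 1)%:R| <= eps.
Proof.
move=> h1 h2 h3 heps.
have [hs [hk hq]] := params h1 h2 h3.
move: hs hk hq.
set d := (k - l)%N; set s := ceil_div k d; set q := (k %% d)%N => hs hk /andP [hq0 hqd].
have hd : (0 < d)%N by lia.
have hsd : (d <= s.-1 * d)%N by rewrite leq_pmull; lia.
have hk3 : (3 <= k)%N by move: hk hsd; set X := (s.-1 * d)%N; lia.
have hlk : (l < k)%N by lia.
set T1 := Num.Def.archi_bound ((k.-1)%:R / eps : R).
exists ((k + 1) * s * s + k + d + T1)%N => t ht.
have hts0 : ((k + 1) * s * s <= t)%N by lia.
have [a [b [hab hdiv habs hb hn]]] := choose_ab hs hk3 hd hts0.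
have hss : (s <= (k + 1) * s * s)%N.
  rewrite -mulnA; apply: (@leq_trans (s * s)); first by rewrite leq_pmull; lia.
  by rewrite leq_pmull; lia.
have hts : (s <= t)%N by lia.
have hkm : (k + (k - l) <= t * (k - l))%N.
  have : (t <= t * d)%N by rewrite leq_pmulr.
  rewrite -/d; lia.
have hk0 : (0 < k)%N by lia.
pose F := colN k d q s a t.
have hF : forall y, (F y < k)%N := fun y => colN_lt hs hab hts hk hq0 hqd hdiv y hk0.
have hinj : forall j i1 i2, (i1 < k)%N -> (i2 < k)%N ->
    F (j * (k - l) + i1)%N = F (j * (k - l) + i2)%N -> i1 = i2.
  by move=> j i1 i2; apply: (rainbow hs hab hts hk hq0 hqd hdiv).
have hper : forall y, F (y %% (t * (k - l)))%N = F y.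
  by move=> y; apply: (colN_mod hs hab hts hk hq0 hqd hdiv).
exists (fun c => #|[set v : 'I_(t * (k - l)) | colF hF v == c]|).
split.
  split; first by move=> j _; split; [apply: card_edge | apply: card_inter].
  exists (colF hF); split => // j _ c.
  exact: (rainbow_set hlk hkm hF hinj hper j c).
have hT1 : (k.-1)%:R / eps < (T1%:R : R).
  by apply: archi_boundP; rewrite divr_ge0 // ltW.
have hT1t : (T1%:R : R) <= t%:R by rewrite ler_nat; lia.
have hKt : (k.-1)%:R <= eps * t%:R.
  rewrite -ler_pdivrMl //; apply: ltW; apply: lt_le_trans hT1t.
  by rewrite mulrC.
have hn0 : `|(a + b)%:R / (t * (k - l))%:R - lambda_kl k l| <= eps.
  rewrite /lambda_kl -/d -/s !natrM.
  apply: (@real_bound R ((a + b)%:R) (t%:R) (b%:R) (s%:R) (d%:R) ((k.-1)%:R) eps) => //.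
  - by rewrite ltr0n; lia.
  - by rewrite ltr0n; lia.
  - by rewrite ler1n.
  - by rewrite -natrM -natrD habs.
  - by rewrite -natrM ler_nat.
move=> i /=.
have -> : [set v : 'I_(t * (k - l)) | colF hF v == i] =
          [set v : 'I_(t * (k - l)) | (fun y => F y == val i)%N (val v)].
  by apply/setP => v; rewrite !inE.
rewrite (card_count _ (fun y => F y == val i)%N).
case: ifP => hi0.
  have hv : val i = 0%N by apply/eqP.
  by rewrite hv (count_col0 hs hab hts hk hq0 hqd).
rewrite (count_colc hs hab hts hk hq0 hqd hdiv (c := val i)); last first.
  - exact: ltn_ord.
  - by rewrite lt0n hi0.
rewrite natf_div // natrB //.
have hm0 : (t * (k - l))%:R != 0 :> R by rewrite pnatr_eq0 -lt0n muln_gt0; apply/andP; split; lia.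
have -> : ((t * d)%:R - (a + b)%:R) / (k.-1)%:R / (t * (k - l))%:R =
          (1 - (a + b)%:R / (t * (k - l))%:R) / (k - 1)%:R :> R.
  rewrite subn1 -/d; field.
  by repeat (apply/andP; split); rewrite pnatr_eq0 -lt0n; lia.
apply: real_bound2 => //.
by rewrite ler1n; lia.
Qed.
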